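(* Let $L$ be a finite-dimensional Lie algebra over a field $F$ and let $S$ and $T$ be subalgebras of $L$ which are nil on $L$. Assume that $[S,T]\subseteq T$. Then $S+T$ is nil on $L$.
   Context: A subalgebra $S$ of $L$ is nil on $L$ if $\mathrm{ad}_L x$ is nilpotent for every $x\in S$. *)

(* Defs.v *)
(* A finite-dimensional Lie algebra over a field F is
   modelled as a finite-dimensional F-vector space L (a vectType F) together
   with a Lie bracket br : L -> L -> L (bilinear, alternating, Jacobi). *)
From HB Require Import structures.
From mathcomp Require Import all_boot all_order all_algebra.
Set Implicit Arguments. Unset Strict Implicit. Unset Printing Implicit Defensive.
Import GRing.Theory.
Local Open Scope ring_scope.

Definition lie_bracket (F : fieldType) (L : vectType F) (br : L -> L -> L) : Prop :=
  [/\ (forall (a : F) (x y z : L), br (a *: x + y) z = a *: br x z + br y z),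
      (forall (a : F) (x y z : L), br z (a *: x + y) = a *: br z x + br z y),
      (forall x : L, br x x = 0) &
      (forall x y z : L, br x (br y z) + br y (br z x) + br z (br x y) = 0)].

Definition ad (F : fieldType) (L : vectType F) (br : L -> L -> L) (x : L) : L -> L :=
  br x.

Definition ad_nilpotent (F : fieldType) (L : vectType F) (br : L -> L -> L) (x : L) : Prop :=
  exists n : nat, forall v : L, iter n (ad br x) v = 0.

Definition subalgebra (F : fieldType) (L : vectType F) (br : L -> L -> L)
  (S : {vspace L}) : Prop :=
  forall x y, x \in S -> y \in S -> br x y \in S.

Definition nil_on (F : fieldType) (L : vectType F) (br : L -> L -> L)
  (S : {vspace L}) : Prop :=
  forall x, x \in S -> ad_nilpotent br x.

Definition bracket_sub (F : fieldType) (L : vectType F) (br : L -> L -> L)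
  (S T U : {vspace L}) : Prop :=
  forall s t, s \in S -> t \in T -> br s t \in U.

(* Main.v *)
From Stdlib Require Import Classical.
Require Import Defs.
From HB Require Import structures.
From mathcomp Require Import all_boot all_order all_algebra.
Set Implicit Arguments. Unset Strict Implicit. Unset Printing Implicit Defensive.
Import GRing.Theory.
Local Open Scope ring_scope.

Lemma brDl (F : fieldType) (L : vectType F) (br : L -> L -> L) (hL : lie_bracket br) x y z :
  br (x + y) z = br x z + br y z.
Proof. have [h _ _ _] : lie_bracket br := hL. by rewrite -(scale1r x) h !scale1r. Qed.

Lemma br0l (F : fieldType) (L : vectType F) (br : L -> L -> L) (hL : lie_bracket br) z :
  br 0 z = 0.
Proof.
have h := brDl hL 0 0 z; rewrite addr0 in h.
by apply: (addrI (br 0 z)); rewrite addr0 -h.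
Qed.

Lemma brZl (F : fieldType) (L : vectType F) (br : L -> L -> L) (hL : lie_bracket br) a x z :
  br (a *: x) z = a *: br x z.
Proof. have [h _ _ _] : lie_bracket br := hL. by rewrite -(addr0 (a *: x)) h (br0l hL) !addr0. Qed.

Lemma brDr (F : fieldType) (L : vectType F) (br : L -> L -> L) (hL : lie_bracket br) x y z :
  br z (x + y) = br z x + br z y.
Proof. have [_ h _ _] : lie_bracket br := hL. by rewrite -(scale1r x) h !scale1r. Qed.

Lemma br0r (F : fieldType) (L : vectType F) (br : L -> L -> L) (hL : lie_bracket br) z :
  br z 0 = 0.
Proof.
have h := brDr hL 0 0 z; rewrite addr0 in h.
by apply: (addrI (br z 0)); rewrite addr0 -h.
Qed.

Lemma brZr (F : fieldType) (L : vectType F) (br : L -> L -> L) (hL : lie_bracket br) a x z :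
  br z (a *: x) = a *: br z x.
Proof. have [_ h _ _] : lie_bracket br := hL. by rewrite -(addr0 (a *: x)) h (br0r hL) !addr0. Qed.

Lemma br_anti (F : fieldType) (L : vectType F) (br : L -> L -> L) (hL : lie_bracket br) x y :
  br x y = - br y x.
Proof.
have [_ _ hxx _] : lie_bracket br := hL.
have h0 := hxx (x + y).
rewrite (brDl hL) !(brDr hL) !hxx add0r addr0 in h0.
by apply/eqP; rewrite -addr_eq0 h0.
Qed.

Lemma brNr (F : fieldType) (L : vectType F) (br : L -> L -> L) (hL : lie_bracket br) x z :
  br z (- x) = - br z x.
Proof. by rewrite -scaleN1r (brZr hL) scaleN1r. Qed.

Lemma brNl (F : fieldType) (L : vectType F) (br : L -> L -> L) (hL : lie_bracket br) x z :
  br (- x) z = - br x z.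
Proof. by rewrite -scaleN1r (brZl hL) scaleN1r. Qed.

Lemma br_jac (F : fieldType) (L : vectType F) (br : L -> L -> L) (hL : lie_bracket br) m y v :
  br m (br y v) = br y (br m v) + br (br m y) v.
Proof.
have [_ _ _ hj] : lie_bracket br := hL. have h := hj m y v.
rewrite (br_anti hL v m) (br_anti hL v (br m y)) (brNr hL) in h.
apply/eqP; rewrite -subr_eq0 opprD addrA; apply/eqP; exact: h.
Qed.

Lemma iterQ (T : Type) (f : T -> T) (Q : T -> Prop) w j :
  (forall v, Q v -> Q (f v)) -> Q w -> Q (iter j f w).
Proof. move=> hQ hw; elim: j => [|j IH] //=; exact: hQ. Qed.

Lemma iter_trick (F : fieldType) (L : vectType F) (f : L -> L) (V0 : {vspace L})
  (Q : L -> Prop) n w0 :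
  (forall v, iter n f v = 0) -> (forall v, Q v -> Q (f v)) -> Q w0 -> w0 \notin V0 ->
  exists w, [/\ Q w, w \notin V0 & f w \in V0].
Proof.
move=> hn hQ hw0 hnot0.
suff: forall m j, (n <= j + m)%N -> iter j f w0 \notin V0 ->
  exists w, [/\ Q w, w \notin V0 & f w \in V0].
  by move=> /(_ n 0%N); apply => //; rewrite add0n.
elim=> [|m IH] j hj hnot.
  rewrite addn0 in hj.
  by rewrite -(subnKC hj) iterD hn rpred0 in hnot.
case h: (f (iter j f w0) \in V0).
  by exists (iter j f w0); split => //; apply: iterQ.
apply: (IH j.+1); first by rewrite addSnnS.
by rewrite iterS h.
Qed.

Lemma max_exists (P : nat -> Prop) N :
  P 0%N -> (forall n, P n -> (n < N)%N) -> exists n, P n /\ forall m, P m -> (m <= n)%N.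
Proof.
move=> P0 hN; apply: NNPP => hc.
have step : forall n, P n -> exists m, P m /\ (n < m)%N.
  move=> n Pn; apply: NNPP => hc2; apply: hc; exists n; split => // m Pm.
  case: (leqP m n) => // hlt; exfalso; apply: hc2; by exists m.
have: forall k, exists n, P n /\ (k <= n)%N.
  elim=> [|k [n [Pn hk]]]; first by exists 0%N.
  have [m [Pm hm]] := step n Pn; exists m; split => //; exact: leq_ltn_trans hm.
move=> /(_ N) [n [Pn hn]]; have := hN n Pn; by rewrite ltnNge hn.
Qed.

Lemma engel_step (F : fieldType) (L : vectType F) (br : L -> L -> L) (hL : lie_bracket br) d :
  forall K : {vspace L}, (\dim K <= d)%N -> subalgebra br K -> nil_on br K ->
  forall V0 V1 : {vspace L}, (V0 <= V1)%VS -> ~~ (V1 <= V0)%VS ->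
  (forall k v, k \in K -> v \in V0 -> br k v \in V0) ->
  (forall k v, k \in K -> v \in V1 -> br k v \in V1) ->
  exists w, [/\ w \in V1, w \notin V0 & forall k, k \in K -> br k w \in V0].
Proof.
elim: d => [|d IH] K hdK hK nK V0 V1 h01 hn01 sV0 sV1.
  have [w [hw1 hw0]] : exists w, w \in V1 /\ w \notin V0.
    apply: NNPP => hc; apply: (negP hn01); apply/subvP => x hx.
    case h: (x \in V0) => //; exfalso; apply: hc; exists x; by rewrite h.
  exists w; split => // k; have : \dim K = 0%N by apply/eqP; rewrite -leqn0.
  move/eqP; rewrite dimv_eq0 => /eqP ->; rewrite memv0 => /eqP ->.
  by rewrite (br0l hL) rpred0.
case: (leqP (\dim K) d) => hd; first by apply: (IH K).
pose P n := exists M : {vspace L}, [/\ (M <= K)%VS, subalgebra br M, \dim M = n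
                                    & (n < \dim K)%N].
have P0 : P 0%N.
  exists 0%VS; split; [exact: sub0v | | by rewrite dimv0 | exact: leq_ltn_trans hd].
  move=> x y; rewrite memv0 => /eqP -> _; by rewrite (br0l hL) rpred0.
have hPN : forall n, P n -> (n < \dim K)%N by move=> m [M' [_ _ _ h]].
have [n [[M [hMK hM hdM hnK]] hmax]] := max_exists P0 hPN.
have sMK : {subset M <= K} by apply/subvP.
have nM : nil_on br M by move=> x /sMK; apply: nK.
have hdM' : (\dim M <= d)%N by rewrite hdM -ltnS; exact: leq_trans hnK hdK.
have [y [hyK hyM hMy]] : exists y, [/\ y \in K, y \notin M & forall m, m \in M -> br m y \in M].
  have := IH M hdM' hM nM M K hMK _ hM _.
  case => //.
  - apply/negP => hKM; have := dimvS hKM; by rewrite leqNgt hdM hnK.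
  - by move=> k v /sMK hk hv; apply: hK.
  by move=> w [h1 h2 h3]; exists w; split => // m hm; apply: h3.
set N := (M + <[y]>)%VS.
have memN : forall x, x \in N -> exists m a, m \in M /\ x = m + a *: y.
  move=> x /memv_addP [m hm [u /vlineP [a ->] ->]]; by exists m, a.
have hN : subalgebra br N.
  move=> x z /memN [m1 [a [hm1 ->]]] /memN [m2 [b [hm2 ->]]].
  apply: (subvP (addvSl M <[y]>)).
  have [_ _ hxx _] : lie_bracket br := hL.
  rewrite !(brDl hL) !(brDr hL) !(brZl hL) !(brZr hL) hxx !scaler0 !addr0.
  rewrite (br_anti hL y m2).
  by rewrite !rpredD ?rpredZ ?rpredN ?hMy ?hM.
have hNK : (N <= K)%VS by rewrite subv_add hMK -memvE.
have ltMN : (\dim M < \dim N)%N.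
  rewrite (ltn_leqif (dimv_leqif_sup (addvSl M <[y]>))).
  apply/negP => /subvP hNM; move/negP: hyM; apply; apply: hNM.
  by apply: (subvP (addvSr M <[y]>)); apply: memv_line.
have eNK : N = K.
  apply/eqP; rewrite eqEdim hNK /=.
  rewrite leqNgt; apply/negP => hlt.
  have := hmax (\dim N) (ex_intro _ N (And4 hNK hN erefl hlt)).
  by rewrite -hdM leqNgt ltMN.
have [w0 [hw01 hw00 hw0M]] := IH M hdM' hM nM V0 V1 h01 hn01
   (fun k v hk hv => sV0 k v (sMK k hk) hv) (fun k v hk hv => sV1 k v (sMK k hk) hv).
have [ny hny] := nK y hyK.
have [w [[hw1 hwM] hw0 hyw]] := iter_trick (f := br y) (V0 := V0)
   (Q := fun v => v \in V1 /\ forall m, m \in M -> br m v \in V0) hny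
   (fun v '(conj h1 h2) => conj (sV1 y v hyK h1) (fun m hm =>
      eq_ind_r (fun u => u \in V0) (rpredD (sV0 y _ hyK (h2 m hm)) (h2 _ (hMy m hm)))
        (br_jac hL m y v)))
   (conj hw01 hw0M) hw00.
exists w; split => // k; rewrite -eNK => /memN [m [a [hm ->]]].
rewrite (brDl hL) (brZl hL). by apply: rpredD; [exact: hwM | exact: rpredZ].
Qed.

Lemma line_step (F : fieldType) (L : vectType F) (br : L -> L -> L) (hL : lie_bracket br)
  (x w : L) (V0 : {vspace L}) :
  (forall v, v \in V0 -> br x v \in V0) -> br x w \in V0 ->
  forall z, z \in (V0 + <[w]>)%VS -> br x z \in V0.
Proof.
move=> hV hw z /memv_addP [v hv [u /vlineP [a ->] ->]].
rewrite (brDr hL) (brZr hL); apply: rpredD; [exact: hV | exact: rpredZ].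
Qed.

Lemma full_case (F : fieldType) (L : vectType F) (V0 : {vspace L}) :
  (\dim (fullv : {vspace L}) <= \dim V0)%N -> forall v : L, v \in V0.
Proof.
move=> h v; have [_ e] := dimv_leqif_sup (subvf V0).
have : (fullv <= V0)%VS.
  rewrite -e eqn_leq h andbT; exact: dimvS (subvf V0).
by move/subvP; apply; apply: memvf.
Qed.

Lemma chain (F : fieldType) (L : vectType F) (br : L -> L -> L) (hL : lie_bracket br)
  (T : {vspace L}) (hT : subalgebra br T) (nT : nil_on br T) (s t : L)
  (hsT : forall t', t' \in T -> br s t' \in T) (ht : t \in T)
  (ns : exists n, forall v, iter n (br s) v = 0) :
  forall k (V0 : {vspace L}), (\dim (fullv : {vspace L}) <= \dim V0 + k)%N ->
  (forall v, v \in V0 -> br s v \in V0) ->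
  (forall t' v, t' \in T -> v \in V0 -> br t' v \in V0) ->
  exists n, forall v, iter n (br (s + t)) v \in V0.
Proof.
have [ns' hns] := ns.
elim=> [|k IH] V0 hk sS sT.
  exists 0%N => v; apply: full_case; by rewrite addn0 in hk.
case hf: (fullv <= V0)%VS.
  by exists 0%N => v /=; move/subvP: hf; apply; apply: memvf.
have [w0 [_ hw00 hw0T]] := engel_step hL (leqnn (\dim T)) hT nT (subvf V0)
  (negbT hf) sT (fun k v _ _ => memvf _).
have clos : forall v, (forall t', t' \in T -> br t' v \in V0) ->
    forall t', t' \in T -> br t' (br s v) \in V0.
  move=> v h t' ht'; rewrite (br_jac hL) rpredD ?sS ?h //.
  by rewrite (br_anti hL) rpredN hsT.
have [w [hwT hw0 hsw]] := iter_trick (f := br s) (V0 := V0)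
   (Q := fun v => forall t', t' \in T -> br t' v \in V0) hns clos hw0T hw00.
have ltV : (\dim V0 < \dim (V0 + <[w]>)%VS)%N.
  rewrite (ltn_leqif (dimv_leqif_sup (addvSl V0 <[w]>))).
  apply/negP => /subvP hNM; move/negP: hw0; apply; apply: hNM.
  by apply: (subvP (addvSr V0 <[w]>)); apply: memv_line.
have hk' : (\dim (fullv : {vspace L}) <= \dim (V0 + <[w]>)%VS + k)%N.
  by apply: (leq_trans hk); rewrite addnS -addSn leq_add2r.
have [n hn] := IH (V0 + <[w]>)%VS hk'
  (fun v hv => subvP (addvSl V0 <[w]>) _ (line_step hL sS hsw hv))
  (fun t' v ht' hv => subvP (addvSl V0 <[w]>) _ (line_step hL (fun u hu => sT t' u ht' hu) (hwT t' ht') hv)).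
exists n.+1 => v; rewrite iterS.
apply: (line_step hL _ _ (hn v)).
  by move=> u hu; rewrite (brDl hL) rpredD ?sS ?sT.
by rewrite (brDl hL) rpredD ?hsw ?hwT.
Qed.

Theorem lemma4p1 (F : fieldType) (L : vectType F) (br : L -> L -> L)
  (hL : lie_bracket br) (S T : {vspace L})
  (hS : subalgebra br S) (hT : subalgebra br T)
  (nS : nil_on br S) (nT : nil_on br T)
  (hST : bracket_sub br S T T) :
  nil_on br (S + T)%VS.
Proof.
move=> x /memv_addP [s hs [t ht ->]].
have h0 : (\dim (fullv : {vspace L}) <= \dim (0%VS : {vspace L}) + \dim (fullv : {vspace L}))%N.
  by rewrite dimv0 add0n.
have z0 : forall y v, v \in (0%VS : {vspace L}) -> br y v \in (0%VS : {vspace L}).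
  by move=> y v; rewrite memv0 => /eqP ->; rewrite (br0r hL) rpred0.
have [n hn] := chain hL hT nT (fun t' ht' => hST s t' hs ht') ht (nS s hs) h0
  (fun v hv => z0 s v hv) (fun t' v _ hv => z0 t' v hv).
exists n => v; have := hn v; rewrite /ad memv0; move/eqP; exact.
Qed.
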